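(* Let $\lambda\neq0$ and $\alpha,\beta\in\mathbb R$ with $\tau\bar\tau=\alpha^2-\lambda\beta^2\neq0$. Let $v\in\mathfrak g$, $v\neq0$, and $x,y,z\in\mathbb R$ satisfy $$-(\lambda x^2+z^2)\langle v,v\rangle=\mu,\qquad -2xz\,\langle v,v\rangle=\nu .$$ Then the maps $C=x\,[v,\cdot]$, $A=\lambda C$, $B=y\,vv^t+z\,[v,\cdot]$ satisfy the four coupled equations of the context, and the corresponding $r=r'+K_\tau$ is a compatible $r$-matrix (for every value of $y\in\mathbb R$). Conversely, if $\lambda\neq0$, $A=\lambda C$, $C=x[v,\cdot]$ with $v\neq0$, and $B=y\,vv^t+[w,\cdot]$ with $w\in\mathfrak g$ and $y\neq0$, and $A,B,C$ satisfy these four equations, then $w=zv$ for some $z\in\mathbb R$ and the two displayed normalisation conditions hold.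
   Context: Let $\mathfrak g$ denote either $so(3)$ or $so(2,1)$, with basis $J_0,J_1,J_2$ and metric $\eta=\mathrm{diag}(1,1,1)$ (for $so(3)$) or $\eta=\mathrm{diag}(1,-1,-1)$ (for $so(2,1)$); indices are raised and lowered with $\eta$, summation over repeated indices is implied, $\epsilon_{abc}$ is totally antisymmetric with $\epsilon_{012}=\epsilon^{012}=1$, and $[J_a,J_b]=\epsilon_{abc}J^c$. The inner product on $\mathfrak g$ is $\langle J_a,J_b\rangle=\eta_{ab}$. For a linear map $F:\mathfrak g\to\mathfrak g$, $F^t$ denotes its transpose with respect to $\langle\cdot,\cdot\rangle$; for $v\in\mathfrak g$, $v^t=\langle v,\cdot\rangle$, so $vu^t$ is the map $X\mapsto\langle u,X\rangle v$; $[u,\cdot]$ is the map $X\mapsto[u,X]$; $\mathrm{id}$ is the identity and $\mathrm{tr}$ the trace. For $\lambda\in\mathbb R$, $\mathfrak g_\lambda$ is the real six-dimensional Lie algebra with basis $J_a,P_a$ and brackets $[J_a,J_b]=\epsilon_{abc}J^c$, $[J_a,P_b]=\epsilon_{abc}P^c$, $[P_a,P_b]=\lambda\epsilon_{abc}J^c$. For real $\alpha,\beta$ with $\tau\bar\tau:=\alpha^2-\lambda\beta^2\neq0$ set $K_\tau=\frac{\alpha}{\tau\bar\tau}(J_a\otimes P^a+P_a\otimes J^a)-\frac{\beta}{\tau\bar\tau}(\lambda J_a\otimes J^a+P_a\otimes P^a)$, $\mu=\frac{\alpha^2+\lambda\beta^2}{(\tau\bar\tau)^2}$, $\nu=-\frac{2\alpha\beta}{(\tau\bar\tau)^2}$.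 For $r=\sum_i x_i\otimes y_i\in\mathfrak g_\lambda\otimes\mathfrak g_\lambda$ put $r_{12}=\sum_i x_i\otimes y_i\otimes1$, $r_{13}=\sum_i x_i\otimes1\otimes y_i$, $r_{23}=\sum_i1\otimes x_i\otimes y_i$, $[[r,r]]=[r_{12},r_{13}]+[r_{12},r_{23}]+[r_{13},r_{23}]$; a compatible $r$-matrix is $r=r'+K_\tau$ with $r'$ antisymmetric and $[[r,r]]=0$. Given linear maps $A,B,C:\mathfrak g\to\mathfrak g$ with $A^t=-A$, $C^t=-C$, write $M_{ba}=\langle J_b,M(J_a)\rangle$ and set $r'=A_{ba}J^a\otimes J^b+B_{ba}(P^a\otimes J^b-J^b\otimes P^a)+C_{ba}P^a\otimes P^b$. The four coupled equations are: $\tfrac12\mathrm{tr}(A^2)-\tfrac{\lambda}{2}(\mathrm{tr}(B)^2-\mathrm{tr}(B^2))=\mu\lambda$; $\mathrm{tr}(CB)=\nu$; $(B-\mathrm{tr}(B)\mathrm{id})(B+B^t)+\tfrac12(\mathrm{tr}(B)^2-\mathrm{tr}(B^2))\mathrm{id}-CA+\lambda(C^2-\tfrac12\mathrm{tr}(C^2)\mathrm{id})=-\mu\,\mathrm{id}$; $-A(B+B^t)+(B^t-\mathrm{tr}(B)\mathrm{id})(\lambda C-A)-\mathrm{tr}(AB)\mathrm{id}=-\lambda\nu\,\mathrm{id}$. The paper's main theorem asserts that if $A,B,C$ satisfy these four equations then $r'+K_\tau$ is a compatible $r$-matrix. *)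

(* Defs.v *)
(* The Lie algebra g = so(3) (lor = false) or so(2,1) (lor = true)
   is represented in coordinates w.r.t. the basis J_0,J_1,J_2: an element
   u = u^a J_a is a column vector 'cV_3, a linear map F : g -> g is the matrix
   with F(J_b) = sum_a F a b J_a, acting by F *m u; composition is *m. *)
From HB Require Import structures.
From mathcomp Require Import all_boot all_order all_algebra.
Set Implicit Arguments. Unset Strict Implicit. Unset Printing Implicit Defensive.
Import Order.TTheory GRing.Theory Num.Theory.
Local Open Scope ring_scope.

Section Defs.
Variable R : realFieldType.
Variable lor : bool.  (* false: so(3), eta = diag(1,1,1); true: so(2,1), eta = diag(1,-1,-1) *)

(* diagonal entries of eta (eta is its own inverse, so eta^{ab} = eta_{ab}) *)
Definition etad (i : 'I_3) : R := if lor && (i != ord0) then -1 else 1.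
Definition eta : 'M[R]_3 := \matrix_(i, j) (if i == j then etad i else 0).

(* Levi-Civita symbol, eps_012 = eps^012 = 1 *)
Definition eps (i j k : 'I_3) : R :=
  if [&& i != j, j != k & i != k] then
    (if (j : nat) == ((i + 1) %% 3)%N then 1 else -1)
  else 0.

Definition ip (u v : 'cV[R]_3) : R := (u^T *m eta *m v) 0 0.

(* [u, .] : X |-> [u, X], with [J_a, J_b] = eps_abc J^c = eps_abc eta^cd J_d *)
Definition adm (u : 'cV[R]_3) : 'M[R]_3 :=
  \matrix_(d, b) \sum_a \sum_c u a 0 * eps a b c * eta c d.

(* transpose w.r.t. <.,.> : <F^t u, v> = <u, F v> *)
Definition gtr (F : 'M[R]_3) : 'M[R]_3 := eta *m F^T *m eta.

(* v u^t : X |-> <u, X> v *)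
Definition outer (v u : 'cV[R]_3) : 'M[R]_3 := v *m (u^T *m eta).

Definition four_eqs (lam mu nu : R) (A B C : 'M[R]_3) : Prop :=
  [/\ 2^-1 * \tr (A *m A) - lam / 2 * (\tr B ^+ 2 - \tr (B *m B)) = mu * lam,
      \tr (C *m B) = nu,
      (B - (\tr B)%:M) *m (B + gtr B) + (2^-1 * (\tr B ^+ 2 - \tr (B *m B)))%:M
        - C *m A + lam *: (C *m C - (2^-1 * \tr (C *m C))%:M) = - mu%:M
    & - A *m (B + gtr B) + (gtr B - (\tr B)%:M) *m (lam *: C - A)
        - (\tr (A *m B))%:M = - (lam * nu)%:M].

(* The Lie algebra g_lam: basis indexed by (false, a) = J_a, (true, a) = P_a. *)
Definition gidx := (bool * 'I_3)%type.

(* structure constants: [e_i, e_k] = sum_p sc i k p e_p *)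
Definition sc (lam : R) (i k p : gidx) : R :=
  let kind := match i.1, k.1, p.1 with
              | false, false, false => 1
              | false, true, true => 1
              | true, false, true => 1
              | true, true, false => lam
              | _, _, _ => 0 end in
  kind * \sum_c eps i.2 k.2 c * eta c p.2.

(* tensors in g_lam (x) g_lam, by their coefficients on e_i (x) e_j *)
Definition tensor2 := gidx -> gidx -> R.

(* [[r, r]] coefficient on e_p (x) e_q (x) e_s *)
Definition cyb (lam : R) (r : tensor2) (p q s : gidx) : R :=
  \sum_i \sum_k sc lam i k p * r i q * r k s
  + \sum_j \sum_k sc lam j k q * r p j * r k s
  + \sum_j \sum_l sc lam j l s * r p j * r q l.

(* M_{ba} = <J_b, M(J_a)> *)
Definition mco (M : 'M[R]_3) (b a : 'I_3) : R := (eta *m M) b a.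

(* coefficient of J_i (x) J_j in M_{ba} J^a (x) J^b *)
Definition up2 (M : 'M[R]_3) (i j : 'I_3) : R :=
  \sum_a \sum_b mco M b a * eta a i * eta b j.

(* r' = A_ba J^a(x)J^b + B_ba (P^a(x)J^b - J^b(x)P^a) + C_ba P^a(x)P^b *)
Definition rprime (A B C : 'M[R]_3) : tensor2 := fun p q =>
  match p.1, q.1 with
  | false, false => up2 A p.2 q.2
  | true, false => up2 B p.2 q.2
  | false, true => - up2 B q.2 p.2
  | true, true => up2 C p.2 q.2
  end.

Definition ttb (lam alpha beta : R) : R := alpha ^+ 2 - lam * beta ^+ 2.
Definition muT (lam alpha beta : R) : R :=
  (alpha ^+ 2 + lam * beta ^+ 2) / (ttb lam alpha beta) ^+ 2.
Definition nuT (lam alpha beta : R) : R :=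
  - (2 * alpha * beta) / (ttb lam alpha beta) ^+ 2.

(* K_tau = alpha/tt (J_a(x)P^a + P_a(x)J^a) - beta/tt (lam J_a(x)J^a + P_a(x)P^a) *)
Definition Ktau (lam alpha beta : R) : tensor2 := fun p q =>
  let t := ttb lam alpha beta in
  match p.1, q.1 with
  | false, true => alpha / t * eta p.2 q.2
  | true, false => alpha / t * eta p.2 q.2
  | false, false => - (beta / t) * lam * eta p.2 q.2
  | true, true => - (beta / t) * eta p.2 q.2
  end.

Definition antisym (r : tensor2) : Prop := forall p q, r p q = - r q p.

Definition compatible_rmatrix (lam alpha beta : R) (r : tensor2) : Prop :=
  exists r' : tensor2, antisym r' /\ (forall p q, r p q = r' p q + Ktau lam alpha beta p q)
    /\ (forall p q s, cyb lam r p q s = 0).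

End Defs.

(* Main.v *)
Require Import Defs.
From HB Require Import structures.
From mathcomp Require Import all_boot all_order all_algebra.
Import Order.TTheory GRing.Theory Num.Theory.
Local Open Scope ring_scope.
From mathcomp Require Import ring.
Set Implicit Arguments. Unset Strict Implicit. Unset Printing Implicit Defensive.


Definition o0 : 'I_3 := @Ordinal 3 0 isT.
Definition o1 : 'I_3 := @Ordinal 3 1 isT.
Definition o2 : 'I_3 := @Ordinal 3 2 isT.
Lemma sum3 (R : nmodType) (F : 'I_3 -> R) : \sum_(i < 3) F i = F o0 + F o1 + F o2.
Proof.
rewrite !big_ord_recl big_ord0 addr0 addrA.
by congr (F _ + F _ + F _); apply: val_inj.
Qed.
Lemma ord3 (i : 'I_3) : i = o0 \/ i = o1 \/ i = o2.
Proof.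
case: i => [[|[|[|m]]] Hm]; [left|right;left|right;right|by []]; exact: val_inj.
Qed.
Lemma ord1_0 (i : 'I_1) : i = 0.
Proof. by apply: val_inj; case: i => [[|m] Hm]. Qed.
Lemma ord0_is0 : (ord0 : 'I_1) = 0.
Proof. exact: ord1_0. Qed.
Lemma sumg (R : nmodType) (F : gidx -> R) : \sum_(p : gidx) F p =
  F (true,o0) + F (true,o1) + F (true,o2) + (F (false,o0) + F (false,o1) + F (false,o2)).
Proof.
rewrite (eq_bigr (fun p => (fun a b => F (a,b)) p.1 p.2)); last by case.
by rewrite -(pair_bigA _ (fun a b => F (a,b))) big_bool /= !sum3.
Qed.

Section Work.
Variable R : realFieldType.
Variable lor : bool.

Definition epsn (i j k : nat) : R := match i, j, k with
 | 0,1,2 => 1 | 1,2,0 => 1 | 2,0,1 => 1 | 0,2,1 => -1 | 2,1,0 => -1 | 1,0,2 => -1 | _,_,_ => 0 end.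
Definition etadn (n : nat) : R := if n is 0%N then 1 else if lor then -1 else 1.

Lemma epsE i j k : Defs.eps R i j k = epsn i j k.
Proof.
have [->|[->|->]] := ord3 i; have [->|[->|->]] := ord3 j; have [->|[->|->]] := ord3 k;
  rewrite /Defs.eps /=; reflexivity.
Qed.
Lemma etadE i : Defs.etad R lor i = etadn i.
Proof. rewrite /etadn; case: lor; have [->|[->|->]] := ord3 i; rewrite /Defs.etad /=; reflexivity. Qed.
Lemma etaE i j : Defs.eta R lor i j = if eqn i j then etadn i else 0.
Proof. by rewrite mxE etadE. Qed.

Lemma mulE m n p (M : 'M[R]_(m,n)) (N : 'M[R]_(n,p)) i j :
  (M *m N) i j = \sum_k M i k * N k j.
Proof. by rewrite mxE. Qed.
Lemma etaML n (M : 'M[R]_(3,n)) i j : (Defs.eta R lor *m M) i j = etadn i * M i j.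
Proof. rewrite mxE sum3 !etaE; have [->|[->|->]] := ord3 i; rewrite /=; ring. Qed.
Lemma etaMR m (M : 'M[R]_(m,3)) i j : (M *m Defs.eta R lor) i j = M i j * etadn j.
Proof. rewrite mxE sum3 !etaE; have [->|[->|->]] := ord3 j; rewrite /=; ring. Qed.

Definition Sv (v : 'cV[R]_3) (i j : nat) : R :=
  v o0 0 * epsn 0 i j + v o1 0 * epsn 1 i j + v o2 0 * epsn 2 i j.

Lemma admM (v : 'cV[R]_3) : adm lor v = \matrix_(d, b) (etadn d * Sv v b d).
Proof.
apply/matrixP => d b; rewrite !mxE sum3 !sum3 !etaE !epsE /Sv.
have [->|[->|->]] := ord3 d; rewrite /=; ring.
Qed.
Lemma outerM (v u : 'cV[R]_3) : outer lor v u = \matrix_(i, j) (v i 0 * (u j 0 * etadn j)).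
Proof. by apply/matrixP => i j; rewrite /outer mulE big_ord1 etaMR !mxE ord0_is0. Qed.
Lemma ipE (v : 'cV[R]_3) : ip lor v v =
  v o0 0 * etadn o0 * v o0 0 + v o1 0 * etadn o1 * v o1 0 + v o2 0 * etadn o2 * v o2 0.
Proof. by rewrite /ip mulE sum3 !etaMR !mxE. Qed.

Lemma mulM (f g : 'I_3 -> 'I_3 -> R) : (\matrix_(i,j) f i j) *m (\matrix_(i,j) g i j) =
  \matrix_(i,j) (f i o0 * g o0 j + f i o1 * g o1 j + f i o2 * g o2 j).
Proof. by apply/matrixP => i j; rewrite !mxE sum3 !mxE. Qed.
Lemma addM (f g : 'I_3 -> 'I_3 -> R) : (\matrix_(i,j) f i j) + (\matrix_(i,j) g i j) =
  \matrix_(i,j) (f i j + g i j).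
Proof. by apply/matrixP => i j; rewrite !mxE. Qed.
Lemma oppM (f : 'I_3 -> 'I_3 -> R) : - (\matrix_(i,j) f i j) = \matrix_(i,j) (- f i j).
Proof. by apply/matrixP => i j; rewrite !mxE. Qed.
Lemma scaleM a (f : 'I_3 -> 'I_3 -> R) : a *: (\matrix_(i,j) f i j) = \matrix_(i,j) (a * f i j).
Proof. by apply/matrixP => i j; rewrite !mxE. Qed.
Lemma trM (f : 'I_3 -> 'I_3 -> R) : \tr (\matrix_(i,j) f i j) = f o0 o0 + f o1 o1 + f o2 o2.
Proof. by rewrite /mxtrace sum3 !mxE. Qed.
Lemma scalarM (a : R) : a%:M = \matrix_(i,j) (if eqn i j then a else 0) :> 'M[R]_3.
Proof. by apply/matrixP => i j; rewrite !mxE; change (eqn i j) with (i == j); case: (i == j); rewrite ?mulr1n ?mulr0n. Qed.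
Lemma gtrM (f : 'I_3 -> 'I_3 -> R) : gtr lor (\matrix_(i,j) f i j) = \matrix_(i,j) (etadn i * f j i * etadn j).
Proof. by apply/matrixP => i j; rewrite /gtr etaMR etaML !mxE. Qed.
Lemma eqM (f g : 'I_3 -> 'I_3 -> R) : (forall i j, f i j = g i j) ->
   \matrix_(i,j) f i j = \matrix_(i,j) g i j.
Proof. by move=> H; apply/matrixP => i j; rewrite !mxE H. Qed.

Ltac mxsimp := rewrite ?admM ?outerM ?ipE; rewrite !(mulM, addM, oppM, scaleM, gtrM, trM, scalarM).
Ltac ev := cbv beta iota zeta delta [epsn etadn o0 o1 o2 nat_of_ord eqn Sv].

Section P1.
Variables (v : 'cV[R]_3) (x y z lam mu nu : R).
Hypothesis hmu : - (lam * x ^+ 2 + z ^+ 2) * ip lor v v = mu.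
Hypothesis hnu : - (2 * x * z) * ip lor v v = nu.
Let C := x *: adm lor v.
Let A := lam *: C.
Let B := y *: outer lor v v + z *: adm lor v.

Lemma p1e1 : 2^-1 * \tr (A *m A) - lam / 2 * (\tr B ^+ 2 - \tr (B *m B)) = mu * lam.
Proof.
rewrite -hmu /A /B /C; mxsimp. ev. case: lor => /=; field; done.
Qed.
Lemma p1e2 : \tr (C *m B) = nu.
Proof. rewrite -hnu /B /C; mxsimp; ev; case: lor => /=; ring. Qed.
Lemma p1e3 : (B - (\tr B)%:M) *m (B + gtr lor B) + (2^-1 * (\tr B ^+ 2 - \tr (B *m B)))%:M
        - C *m A + lam *: (C *m C - (2^-1 * \tr (C *m C))%:M) = - mu%:M.
Proof.
rewrite -hmu /A /B /C. mxsimp. apply: eqM => i j.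
(have [->|[->|->]] := ord3 i; have [->|[->|->]] := ord3 j; ev; case: lor; field; done).
Qed.
Lemma p1e4 : - A *m (B + gtr lor B) + (gtr lor B - (\tr B)%:M) *m (lam *: C - A)
        - (\tr (A *m B))%:M = - (lam * nu)%:M.
Proof.
rewrite -hnu /A /B /C. mxsimp. apply: eqM => i j.
(have [->|[->|->]] := ord3 i; have [->|[->|->]] := ord3 j; ev; case: lor; ring).
Qed.
Lemma p1gC : gtr lor C = - C.
Proof. rewrite /C; mxsimp; apply: eqM => i j; have [->|[->|->]] := ord3 i; have [->|[->|->]] := ord3 j; ev; case: lor; ring. Qed.
Lemma p1gA : gtr lor A = - A.
Proof. rewrite /A /C; mxsimp; apply: eqM => i j; have [->|[->|->]] := ord3 i; have [->|[->|->]] := ord3 j; ev; case: lor; ring. Qed.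
End P1.

Lemma up2E (M : 'M[R]_3) i j : up2 lor M i j = etadn i * M j i.
Proof.
rewrite /up2 sum3 !sum3 /mco !etaML !etaE.
have [->|[->|->]] := ord3 i; have [->|[->|->]] := ord3 j; rewrite /etadn /=; case: lor; ring.
Qed.

Definition nx (i : 'I_3) : 'I_3 := match nat_of_ord i with 0 => o1 | 1 => o2 | _ => o0 end%N.

Section P2.
Variables (v : 'cV[R]_3) (x y z lam a b : R).

Definition Ad (i j : 'I_3) : R := etadn i * (etadn j * Sv v i j).
Definition Ou (i j : 'I_3) : R := etadn i * (v j 0 * (v i 0 * etadn i)).
Definition etf (i j : 'I_3) : R := if eqn i j then etadn i else 0.
Definition rx (p q : gidx) : R :=
  match p.1, q.1 with
  | false, false => lam * x * Ad p.2 q.2 - b * lam * etf p.2 q.2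
  | true, false => y * Ou p.2 q.2 + z * Ad p.2 q.2 + a * etf p.2 q.2
  | false, true => - (y * Ou q.2 p.2 + z * Ad q.2 p.2) + a * etf p.2 q.2
  | true, true => x * Ad p.2 q.2 - b * etf p.2 q.2
  end.

Definition qv := v o0 0 * etadn o0 * v o0 0 + v o1 0 * etadn o1 * v o1 0 + v o2 0 * etadn o2 * v o2 0.
Definition Xf (p q s : gidx) : R := epsn p.2 q.2 s.2 *
  match p.1, q.1, s.1 with
  | false, false, false => lam | true, true, false => 1 | true, false, true => 1
  | false, true, true => 1 | _, _, _ => 0 end.
Definition Yf (p q s : gidx) : R := epsn p.2 q.2 s.2 *
  match p.1, q.1, s.1 with
  | true, false, false => lam | false, true, false => lam | false, false, true => lam
  | true, true, true => 1 | _, _, _ => 0 end.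

Definition Sf (p : gidx) (F G : gidx -> R) : R :=
  let m := p.2 in let m1 := nx m in let m2 := nx m1 in
  etadn m * (if p.1 then F (false,m1) * G (true,m2) - F (false,m2) * G (true,m1)
                     + (F (true,m1) * G (false,m2) - F (true,m2) * G (false,m1))
            else F (false,m1) * G (false,m2) - F (false,m2) * G (false,m1)
                     + lam * (F (true,m1) * G (true,m2) - F (true,m2) * G (true,m1))).

Lemma sumSf (F G : gidx -> R) p :
  \sum_i \sum_k sc lor lam i k p * F i * G k = Sf p F G.
Proof.
rewrite !sumg /sc !sum3 !epsE !etaE.
case: p => [[] p]; have [->|[->|->]] := ord3 p;
cbv beta iota zeta delta [Sf epsn etadn o0 o1 o2 nat_of_ord eqn fst snd nx]; ring.
Qed.

Lemma cyb_rx p q s : cyb lor lam rx p q s =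
  (a ^+ 2 + lam * b ^+ 2 + (lam * x ^+ 2 + z ^+ 2) * qv) * Xf p q s
  + (- (2 * a * b) + 2 * x * z * qv) * Yf p q s.
Proof.
rewrite /cyb (sumSf (fun i => rx i q) (fun k => rx k s)) (sumSf (fun j => rx p j) (fun k => rx k s))
  (sumSf (fun j => rx p j) (fun k => rx q k)).
case: p => [pb p]; have [->|[->|->]] := ord3 p;
case: q => [qb q]; have [->|[->|->]] := ord3 q;
case: s => [sb s]; have [->|[->|->]] := ord3 s;
case: pb; case: qb; case: sb;
cbv beta iota zeta delta [Sf rx Ad Ou etf Xf Yf qv Sv epsn etadn o0 o1 o2 nat_of_ord eqn fst snd nx];
case: lor; ring.
Qed.
End P2.

Lemma mxeq (f g : 'I_3 -> 'I_3 -> R) :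
   \matrix_(i,j) f i j = \matrix_(i,j) g i j -> forall i j, f i j = g i j.
Proof. by move/matrixP => H i j; move: (H i j); rewrite !mxE. Qed.
Lemma lin0 (L Rr Q k : R) : L = Rr -> k * Q = L - Rr -> k != 0 -> Q = 0.
Proof. move=> -> H kn; apply/eqP; move: H; rewrite subrr => /eqP; rewrite mulf_eq0 (negPf kn) //. Qed.
Lemma lin0d (L1 R1 L2 R2 Q k : R) : L1 = R1 -> L2 = R2 -> k * Q = (L1 - R1) - (L2 - R2) -> k != 0 -> Q = 0.
Proof. move=> -> -> H kn; apply/eqP; move: H; rewrite !subrr => /eqP; rewrite mulf_eq0 (negPf kn) //. Qed.

Section P3.
Variables (v w : 'cV[R]_3) (x y lam mu nu : R).
Hypotheses (hv : v != 0) (hy : y != 0) (hlam : lam != 0).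
Let C := x *: adm lor v.
Let A := lam *: C.
Let B := y *: outer lor v v + adm lor w.
Hypothesis e1 : 2^-1 * \tr (A *m A) - lam / 2 * (\tr B ^+ 2 - \tr (B *m B)) = mu * lam.
Hypothesis e2 : \tr (C *m B) = nu.
Hypothesis e3 : (B - (\tr B)%:M) *m (B + gtr lor B) + (2^-1 * (\tr B ^+ 2 - \tr (B *m B)))%:M
        - C *m A + lam *: (C *m C - (2^-1 * \tr (C *m C))%:M) = - mu%:M.

Lemma conv : exists z : R, [/\ w = z *: v,
        - (lam * x ^+ 2 + z ^+ 2) * ip lor v v = mu
      & - (2 * x * z) * ip lor v v = nu].
Proof.
have E := e3; move: E; rewrite /A /B /C; mxsimp => /mxeq E.
pose c0 := v o1 0 * w o2 0 - v o2 0 * w o1 0.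
pose c1 := v o2 0 * w o0 0 - v o0 0 * w o2 0.
pose c2 := v o0 0 * w o1 0 - v o1 0 * w o0 0.
have kn : (if lor then 2 else -2) * y != 0.
  by rewrite mulf_neq0 //; case: lor; rewrite ?oppr_eq0 pnatr_eq0.
have kn' : -2 * y != 0 by rewrite mulf_neq0 // oppr_eq0 pnatr_eq0.
have h01 : c0 * v o1 0 = 0.
  apply: (lin0 (E o0 o1) _ kn); rewrite /c0; ev; case: lor; ring.
have h02 : c0 * v o2 0 = 0.
  apply: (lin0 (E o0 o2) _ kn); rewrite /c0; ev; case: lor; ring.
have h10 : c1 * v o0 0 = 0.
  apply: (lin0 (E o1 o0) _ kn); rewrite /c1; ev; case: lor; ring.
have h12 : c1 * v o2 0 = 0.
  apply: (lin0 (E o1 o2) _ kn'); rewrite /c1; ev; case: lor; ring.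
have h20 : c2 * v o0 0 = 0.
  apply: (lin0 (E o2 o0) _ kn); rewrite /c2; ev; case: lor; ring.
have h21 : c2 * v o1 0 = 0.
  apply: (lin0 (E o2 o1) _ kn'); rewrite /c2; ev; case: lor; ring.
have d01 : c0 * v o0 0 - c1 * v o1 0 = 0.
  apply: (lin0d (E o0 o0) (E o1 o1) _ kn'); rewrite /c0 /c1; ev; case: lor; ring.
have d02 : c0 * v o0 0 - c2 * v o2 0 = 0.
  apply: (lin0d (E o0 o0) (E o2 o2) _ kn'); rewrite /c0 /c2; ev; case: lor; ring.
pose n := v o0 0 ^+ 2 + v o1 0 ^+ 2 + v o2 0 ^+ 2.
have nn : n != 0.
  apply: contra hv => /eqP; rewrite /n => /eqP.
  rewrite paddr_eq0 ?addr_ge0 ?sqr_ge0 // paddr_eq0 ?sqr_ge0 // !sqrf_eq0.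
  case/andP => /andP [/eqP z0 /eqP z1] /eqP z2.
  apply/eqP/matrixP => i j; rewrite (ord1_0 j) mxE.
  by have [->|[->|->]] := ord3 i.
have c0z : c0 = 0.
  have : c0 * n = v o0 0 * (c0 * v o0 0 - c1 * v o1 0) + v o1 0 * (c1 * v o0 0)
     + v o1 0 * (c0 * v o1 0) + v o2 0 * (c0 * v o2 0) by rewrite /n /c0 /c1; ring.
  rewrite d01 h10 h01 h02 !mulr0 !addr0 => /eqP; rewrite mulf_eq0 (negPf nn) orbF.
  by move/eqP.
have c1z : c1 = 0.
  have : c1 * n = v o0 0 * (c1 * v o0 0) + v o0 0 * (c0 * v o1 0)
     - v o1 0 * (c0 * v o0 0 - c1 * v o1 0) + v o2 0 * (c1 * v o2 0) by rewrite /n /c0 /c1; ring.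
  rewrite d01 h10 h01 h12 !mulr0 !addr0 subr0 => /eqP; rewrite mulf_eq0 (negPf nn) orbF.
  by move/eqP.
have c2z : c2 = 0.
  have : c2 * n = v o0 0 * (c2 * v o0 0) + v o1 0 * (c2 * v o1 0)
     + v o0 0 * (c0 * v o2 0) - v o2 0 * (c0 * v o0 0 - c2 * v o2 0) by rewrite /n /c0 /c2; ring.
  rewrite d02 h20 h21 h02 !mulr0 !addr0 subr0 => /eqP; rewrite mulf_eq0 (negPf nn) orbF.
  by move/eqP.
pose S := w o0 0 * v o0 0 + w o1 0 * v o1 0 + w o2 0 * v o2 0.
have hw' : forall i, w i 0 = S / n * v i 0.
  move=> i; apply: (mulIf nn); rewrite mulrAC divfK //.
  have [->|[->|->]] := ord3 i; apply/eqP; rewrite -subr_eq0; apply/eqP.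
  - have -> : w o0 0 * n - S * v o0 0 = - v o1 0 * c2 + v o2 0 * c1 by rewrite /n /S /c1 /c2; ring.
    by rewrite c1z c2z !mulr0 ?oppr0 addr0.
  - have -> : w o1 0 * n - S * v o1 0 = v o0 0 * c2 - v o2 0 * c0 by rewrite /n /S /c0 /c2; ring.
    by rewrite c0z c2z !mulr0 ?subr0.
  - have -> : w o2 0 * n - S * v o2 0 = - v o0 0 * c1 + v o1 0 * c0 by rewrite /n /S /c0 /c1; ring.
    by rewrite c0z c1z !mulr0 ?addr0.
move: (S / n) hw' => z hw'.
have hw : w = z *: v.
  by apply/matrixP => i j; rewrite (ord1_0 j) mxE hw'.
exists z; split => //.
- apply: (mulIf hlam); rewrite -e1 /A /B /C hw; mxsimp; rewrite /Sv !mxE /=.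
  case: lor; field; done.
- rewrite -e2 /B /C hw; mxsimp; rewrite /Sv !mxE /=.
  case: lor; ring.
Qed.
End P3.

Lemma rE (v : 'cV[R]_3) (x y z lam alpha beta : R) p q :
  rprime lor (lam *: (x *: adm lor v)) (y *: outer lor v v + z *: adm lor v) (x *: adm lor v) p q
  + Ktau lor lam alpha beta p q
  = rx v x y z lam (alpha / ttb lam alpha beta) (beta / ttb lam alpha beta) p q.
Proof.
case: p => [[] i]; case: q => [[] j];
rewrite /rprime /Ktau /rx /= etaE !up2E ?admM ?outerM ?(scaleM, addM) !mxE /Ad /Ou /etf; ring.
Qed.

Lemma rp_anti (v : 'cV[R]_3) (x y z lam : R) :
  antisym (rprime lor (lam *: (x *: adm lor v)) (y *: outer lor v v + z *: adm lor v) (x *: adm lor v)).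
Proof.
rewrite /antisym => -[[] i] [[] j]; rewrite /rprime /= !up2E ?admM ?outerM ?(scaleM, addM) !mxE;
have [->|[->|->]] := ord3 i; have [->|[->|->]] := ord3 j; ev; case: lor; ring.
Qed.

Lemma cyb_ext lam (r1 r2 : gidx -> gidx -> R) p q s :
  (forall p q, r1 p q = r2 p q) -> cyb lor lam r1 p q s = cyb lor lam r2 p q s.
Proof.
move=> H; rewrite /cyb; congr (_ + _ + _); apply: eq_bigr => i _; apply: eq_bigr => k _; by rewrite !H.
Qed.

End Work.

Unset Implicit Arguments.

Theorem mainTheorem4 (R : realFieldType) (lor : bool) (lam alpha beta : R) :
  lam != 0 -> ttb lam alpha beta != 0 ->
  (forall (v : 'cV[R]_3) (x y z : R),
      v != 0 ->
      - (lam * x ^+ 2 + z ^+ 2) * ip lor v v = muT lam alpha beta ->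
      - (2 * x * z) * ip lor v v = nuT lam alpha beta ->
      let C := x *: adm lor v in
      let A := lam *: C in
      let B := y *: outer lor v v + z *: adm lor v in
      [/\ gtr lor A = - A, gtr lor C = - C,
          four_eqs lor lam (muT lam alpha beta) (nuT lam alpha beta) A B C
        & compatible_rmatrix lor lam alpha beta
            (fun p q => rprime lor A B C p q + Ktau lor lam alpha beta p q)])
  /\
  (forall (v w : 'cV[R]_3) (x y : R) (A B C : 'M[R]_3),
      v != 0 -> y != 0 ->
      C = x *: adm lor v -> A = lam *: C ->
      B = y *: outer lor v v + adm lor w ->
      four_eqs lor lam (muT lam alpha beta) (nuT lam alpha beta) A B C ->
      exists z : R, [/\ w = z *: v,
        - (lam * x ^+ 2 + z ^+ 2) * ip lor v v = muT lam alpha beta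
      & - (2 * x * z) * ip lor v v = nuT lam alpha beta]).
Proof.
move=> hlam ht; split.
- move=> v x y z hv hmu hnu C A B.
  rewrite /B /A /C; split.
  + exact: p1gA.
  + exact: p1gC.
  + split; [exact: (p1e1 y hmu) | exact: (p1e2 y hnu) | exact: (p1e3 y hmu) | exact: (p1e4 y lam hnu)].
  + exists (rprime lor (lam *: (x *: adm lor v)) (y *: outer lor v v + z *: adm lor v) (x *: adm lor v)).
    split; first exact: rp_anti.
    split; first by [].
    move=> p q s.
    rewrite (@cyb_ext _ lor lam _ _ p q s (@rE _ lor v x y z lam alpha beta)) cyb_rx.
    have q_ip : qv lor v = ip lor v v by rewrite ipE.
    have Ha : (alpha / ttb lam alpha beta) ^+ 2 + lam * (beta / ttb lam alpha beta) ^+ 2 = muT lam alpha beta.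
      by rewrite /muT; field.
    have Hb : - (2 * (alpha / ttb lam alpha beta) * (beta / ttb lam alpha beta)) = nuT lam alpha beta.
      by rewrite /nuT; field.
    rewrite q_ip Ha Hb -hmu -hnu; ring.
- move=> v w x y A B C hv hy hC hA hB [e1 e2 e3 e4].
  subst.
  exact: (conv hv hy hlam e1 e2 e3).
Qed.
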